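(* Let $M$ be a commutative monoid. The map $X\mapsto\mathcal K(X)=\bigcap_{I\in X}I$ is a bijection from the set of irreducible components of the terminal space $\mathcal S(M)$ onto the set of minimal elements (with respect to inclusion) of $\mathcal S(M)$, with inverse $I\mapsto\mathcal H(I)=\{J\in\mathcal S(M)\mid J\supseteq I\}$.
   Context: A monoid is a commutative monoid $(M,\cdot,1)$. An ideal of $M$ is a subset $I\subseteq M$ such that $im\in I$ for all $i\in I$, $m\in M$; it is proper if $I\neq M$. A proper ideal $K$ of $M$ is strongly irreducible if for all ideals $I,J$ of $M$, $I\cap J\subseteq K$ implies $I\subseteq K$ or $J\subseteq K$. $\mathcal S(M)$ is the set of all strongly irreducible ideals of $M$. For $X\subseteq\mathcal S(M)$, $\mathcal K(X)=\bigcap_{I\in X}I$, and $\mathcal{HK}(X)=\{J\in\mathcal S(M)\mid J\supseteq\mathcal K(X)\}$ if $X\neq\emptyset$, $\mathcal{HK}(\emptyset)=\emptyset$. The terminal space of $M$ is the set $\mathcal S(M)$ with the topology whose closed sets are exactly the sets $\mathcal{HK}(X)$, $X\subseteq\mathcal S(M)$. A subset $Y$ of a topological space is irreducible if it is nonempty and whenever $Y\subseteq Y_1\cup Y_2$ with $Y_1,Y_2$ closed, then $Y\subseteq Y_1$ or $Y\subseteq Y_2$; an irreducible component is a maximal (under inclusion) irreducible subset. *)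

(* Defs.v *)
From mathcomp Require Import all_boot.
From mathcomp Require Import boolp classical_sets.
Set Implicit Arguments. Unset Strict Implicit. Unset Printing Implicit Defensive.
Local Open Scope classical_set_scope.

Section TerminalSpace.
Variables (T : Type) (mul : T -> T -> T).

Definition is_ideal (I : set T) : Prop := forall i m, I i -> I (mul i m).

Definition strongly_irreducible (K : set T) : Prop :=
  [/\ is_ideal K, K <> setT &
      forall I J : set T, is_ideal I -> is_ideal J ->
        I `&` J `<=` K -> I `<=` K \/ J `<=` K].

Definition SM : set (set T) := [set K | strongly_irreducible K].

Definition Kc (X : set (set T)) : set T := \bigcap_(I in X) I.

Definition HK (X : set (set T)) : set (set T) :=
  [set J | X !=set0 /\ SM J /\ Kc X `<=` J].

Definition Hc (I : set T) : set (set T) := [set J | SM J /\ I `<=` J].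

Definition ts_closed (C : set (set T)) : Prop :=
  exists X, X `<=` SM /\ C = HK X.

Definition ts_irreducible (Y : set (set T)) : Prop :=
  [/\ Y `<=` SM, Y !=set0 &
      forall Y1 Y2, ts_closed Y1 -> ts_closed Y2 ->
        Y `<=` Y1 `|` Y2 -> Y `<=` Y1 \/ Y `<=` Y2].

Definition ts_component (Y : set (set T)) : Prop :=
  ts_irreducible Y /\ forall Z, ts_irreducible Z -> Y `<=` Z -> Z = Y.

Definition SM_minimal (I : set T) : Prop :=
  SM I /\ forall J, SM J -> J `<=` I -> J = I.

End TerminalSpace.

(* Main.v *)
Require Import Defs.
From mathcomp Require Import all_boot.
From mathcomp Require Import boolp classical_sets.
Local Open Scope classical_set_scope.

Section Aux.
Set Implicit Arguments.
Variables (T : Type) (mul : T -> T -> T).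

Lemma KcE (X : set (set T)) x : Kc X x <-> (forall I, X I -> I x).
Proof. by []. Qed.

Lemma Kc_ideal (X : set (set T)) :
  (forall P, X P -> is_ideal mul P) -> is_ideal mul (Kc X).
Proof. move=> H i m Hi P XP; exact: (H P XP i m (Hi P XP)). Qed.

Lemma KcHc (I : set T) : SM mul I -> Kc (Hc mul I) = I.
Proof.
move=> SI; apply/seteqP; split => x.
- move=> Hx; apply: Hx; split=> //.
- by move=> Ix J [_ IJ]; apply: IJ.
Qed.

Lemma irr_SM (Y : set (set T)) :
  ts_irreducible mul Y -> SM mul (Kc Y).
Proof.
move=> [YS [P0 YP0] Hirr].
have [iP0 pP0 _] := YS P0 YP0.
split.
- by apply: Kc_ideal => P /YS [].
- move=> E; apply: pP0; apply/seteqP; split => // x _.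
  have Hx : Kc Y x by rewrite E.
  exact: Hx.
- move=> I J iI iJ IJ.
  pose YI := [set P | Y P /\ I `<=` P].
  pose YJ := [set P | Y P /\ J `<=` P].
  have cl : forall Z, Z `<=` Y -> ts_closed mul (HK mul Z).
    move=> Z ZY; exists Z; split => //; move=> P /ZY; exact: YS.
  have sub : forall Z, Z `<=` Y -> Z `<=` HK mul Z.
    move=> Z ZY P ZP; split; first by exists P.
    split; first exact: YS (ZY _ ZP).
    by move=> x Kx; apply: Kx.
  have cov : Y `<=` HK mul YI `|` HK mul YJ.
    move=> P YP; have [_ _ Hs] := YS P YP.
    have : I `&` J `<=` P by move=> x /IJ; apply.
    move=> /(Hs I J iI iJ) [IP|JP].
    + by left; apply: sub => //; move=> Q []. 
    + by right; apply: sub => //; move=> Q [].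
  have key : forall Z (K : set T), Z = [set P | Y P /\ K `<=` P] ->
      Y `<=` HK mul Z -> K `<=` Kc Y.
    move=> Z K -> YH x Kx P YP.
    have [[Q [YQ KQ]] [_ HQ]] := YH P YP.
    apply: HQ => R [_ KR]; exact: KR.
  have c1 : ts_closed mul (HK mul YI) by apply: cl => P [].
  have c2 : ts_closed mul (HK mul YJ) by apply: cl => P [].
  case: (Hirr _ _ c1 c2 cov) => H.
  + by left; apply: (key YI).
  + by right; apply: (key YJ).
Qed.

Lemma SM_irr (Y : set (set T)) :
  Y `<=` SM mul -> Y !=set0 -> SM mul (Kc Y) -> ts_irreducible mul Y.
Proof.
move=> YS Y0 [_ pK Hs]; split => // Y1 Y2 [X1 [X1S ->]] [X2 [X2S ->]] cov.
have iX1 : is_ideal mul (Kc X1) by apply: Kc_ideal => P /X1S [].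
have iX2 : is_ideal mul (Kc X2) by apply: Kc_ideal => P /X2S [].
have : Kc X1 `&` Kc X2 `<=` Kc Y.
  move=> x [h1 h2] P YP; case: (cov P YP) => [[_ [_ H]]|[_ [_ H]]]; exact: H.
have ne : forall X, Kc X `<=` Kc Y -> X !=set0.
  move=> X H; apply/set0P/negP => /eqP X0; apply: pK.
  apply/seteqP; split => // x _; apply: H => P; by rewrite X0.
move=> /(Hs _ _ iX1 iX2) [H|H]; [left|right]; move=> P YP; (split; [exact: ne|]);
  (split; [exact: YS|]); move=> x /H; apply; exact.
Qed.

Lemma Hc_irr (I : set T) : SM mul I -> ts_irreducible mul (Hc mul I).
Proof.
move=> SI; apply: SM_irr.
- by move=> P [].
- by exists I; split.
- by rewrite KcHc.
Qed.

End Aux.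

Theorem theorem2p8 (T : Type) (mul : T -> T -> T) (one : T)
    (mulA : forall x y z, mul x (mul y z) = mul (mul x y) z)
    (mulC : forall x y, mul x y = mul y x)
    (mul1 : forall x, mul one x = x) :
  (forall X : set (set T), ts_component mul X ->
      SM_minimal mul (Kc X) /\ Hc mul (Kc X) = X) /\
  (forall I : set T, SM_minimal mul I ->
      ts_component mul (Hc mul I) /\ Kc (Hc mul I) = I).
Proof.
split.
- move=> Y [Yirr Ymax].
  have SK := irr_SM Yirr.
  have YH : Y `<=` Hc mul (Kc Y).
    move=> P YP; split; first by case: Yirr => + _ _; apply.
    by move=> x Kx; apply: Kx.
  have EY : Hc mul (Kc Y) = Y by apply: Ymax => //; exact: Hc_irr.
  split=> //; split=> // J SJ JK.
  have HJ : Y `<=` Hc mul J.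
    rewrite -EY => P [SP KP]; split=> //; move=> x /JK; exact: KP.
  have := Ymax _ (Hc_irr SJ) HJ => E.
  by rewrite -E KcHc.
- move=> I [SI Imin]; split; last exact: KcHc.
  split; first exact: Hc_irr.
  move=> Z Zirr HZ.
  have SK := irr_SM Zirr.
  have KI : Kc Z `<=` I by move=> x Kx; apply: Kx; apply: HZ; split.
  have E := Imin _ SK KI.
  apply/seteqP; split => // P ZP; split; first by case: Zirr => + _ _; apply.
  rewrite -E => x Kx; exact: Kx.
Qed.
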